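(* Let $p$ be a prime and $a,b$ positive integers with $b>1$, and suppose $k=\frac{p^{ab}-1}{b(p^a-1)}$ is an integer and $u=b(p^a-1)$ is a primitive divisor of $p^{ab}-1$. Let $\omega$ be a primitive element of $\mathbb{F}_{p^{ab}}$; for $\alpha\in\mathbb{F}_{p^{ab}}$ write $\alpha=\sum_{i=0}^{b-1}c_i\omega^{ik}$ with $c_i\in\mathbb{F}_{p^a}$ and set $[\alpha]_i=c_{i-1}$ for $i=1,\ldots,b$. For $r\ge1$ define $$N_r=k^{r}\sum_{\substack{r_1+\cdots+r_b=r\\ r_i\ge0}} \frac{r!}{r_{1}!\cdots r_{b}!}\prod_{i=1}^b a_{i}(\alpha),\qquad a_{i}(\alpha)=\begin{cases}\frac{p^{a}-1}{p^{a}}\big((p^{a}-1)^{r_i-1}-(-1)^{r_i-1}\big) & \text{if } [\alpha]_i=0,\\[1mm] \frac{1}{p^{a}}\big((p^{a}-1)^{r_i}-(-1)^{r_i}\big) & \text{if } [\alpha]_i\neq 0.\end{cases}$$ Let $s\ge1$ and let $M_s$ be the number of $(x_1,\ldots,x_s)\in\mathbb{F}_{p^{ab}}^s$ with $x_1^k+\cdots+x_s^k=\alpha$. Then $$M_s=\begin{cases}\sum_{r=1}^{s}\binom{s}{r}N_r & \text{if }\alpha\neq0,\\[1mm] 1+\sum_{r=1}^{s}\binom{s}{r}N_r & \text{if }\alpha=0.\end{cases}$$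
   Context: A divisor $u$ of $p^m-1$ is primitive if $u\nmid p^h-1$ for all $1\le h<m$. Under the hypotheses, $\{1,\omega^k,\ldots,\omega^{(b-1)k}\}$ is a basis of $\mathbb{F}_{p^{ab}}$ over $\mathbb{F}_{p^a}$. *)

(* Defs.v *)
From HB Require Import structures.
From mathcomp Require Import all_boot all_order all_algebra all_field.
Set Implicit Arguments. Unset Strict Implicit. Unset Printing Implicit Defensive.
Import Order.TTheory GRing.Theory Num.Theory.
Local Open Scope ring_scope.

Definition primitive_divisor (p m u : nat) : Prop :=
  (u %| p ^ m - 1)%N /\ forall h : nat, (1 <= h)%N -> (h < m)%N -> ~~ (u %| p ^ h - 1)%N.

(* a_i(alpha), with q = p^a, ri = r_i, and iszero = ([alpha]_i == 0).
   The exponent r_i - 1 is an integer exponent (r_i may be 0). *)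
Definition coef_a (q ri : nat) (iszero : bool) : rat :=
  if iszero then
    ((q%:Q - 1) / q%:Q) * ((q%:Q - 1) ^ (ri%:Z - 1) - (-1) ^ (ri%:Z - 1))
  else
    (1 / q%:Q) * ((q%:Q - 1) ^+ ri - (-1) ^+ ri).

(* N_r : sum over (r_1,...,r_b) with r_i >= 0 and sum r; here the index i
   ranges over 'I_b (zero-based) and z i = ([alpha]_{i+1} == 0) = (c_i == 0). *)
Definition N_r (q k b r : nat) (z : 'I_b -> bool) : rat :=
  k%:Q ^+ r *
  \sum_(t : {ffun 'I_b -> 'I_r.+1} | (\sum_(i < b) (t i : nat))%N == r)
     ((r`!)%:Q / \prod_(i < b) ((t i)`!)%:Q) * \prod_(i < b) coef_a q (t i) (z i).

(* Main.v *)
Require Import Defs.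
From HB Require Import structures.
From mathcomp Require Import all_boot all_order all_algebra all_field.
From mathcomp Require Import ring lra zify.
Import Order.TTheory GRing.Theory Num.Theory.
Local Open Scope ring_scope.
Set Implicit Arguments. Unset Strict Implicit. Unset Printing Implicit Defensive.

Lemma natQ (n : nat) : n%:Q = n%:R.
Proof. by rewrite pmulrn. Qed.

Lemma fact_pred_mul (n : nat) (Hn : (0 < n)%N) :
  ((n - 1)`!)%:R * n%:R = (n`!)%:R :> rat.
Proof.
by case: n Hn => // n _; rewrite subn1 /= factS mulnC natrM.
Qed.

Lemma wt_split (b r : nat) (t : 'I_b -> nat) :
  (\sum_(i < b) t i)%N = r.+1 ->
  (r.+1)`!%:R / \prod_(i < b) ((t i)`!)%:R =
  \sum_(i < b | (0 < t i)%N) (r`!)%:R / \prod_(j < b) ((t j - (j == i))`!)%:R :> rat.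
Proof.
move=> Hs.
have Pnz : \prod_(i < b) ((t i)`!)%:R != 0 :> rat.
  by rewrite prodf_seq_neq0; apply/allP => i _; rewrite pnatr_eq0 -lt0n fact_gt0.
have key : forall i, (0 < t i)%N ->
   \prod_(j < b) ((t j - (j == i))`!)%:R = \prod_(j < b) ((t j)`!)%:R / (t i)%:R :> rat.
  move=> i Hi.
  rewrite (bigD1 i) //= [in RHS](bigD1 i) //= eqxx.
  rewrite (eq_bigr (fun j => ((t j)`!)%:R)); last by move=> j /negbTE ->; rewrite subn0.
  rewrite -(fact_pred_mul Hi) /=; field.
  by rewrite pnatr_eq0 -lt0n.
rewrite [RHS](eq_bigr (fun i => (r`!)%:R / \prod_(j < b) ((t j)`!)%:R * (t i)%:R)); last first.
  move=> i Hi; rewrite key // invf_div; field.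
  by [].
rewrite -big_distrr /=.
rewrite [X in _ / _ * X]big_mkcond /= [X in _ / _ * X](eq_bigr (fun i => (t i)%:R)); last first.
  by move=> i _; case: ifP => // /negbT; rewrite -eqn0Ngt => /eqP ->.
rewrite -natr_sum Hs factS natrM; field.
by rewrite Pnz.
Qed.


Definition Rg (b r : nat) (A : 'I_b -> nat -> rat) : rat :=
  \sum_(t : {ffun 'I_b -> 'I_r.+1} | (\sum_(i < b) (t i : nat))%N == r)
     ((r`!)%:R / \prod_(i < b) ((t i)`!)%:R) * \prod_(i < b) A i (t i).

Lemma sum_le2 (b : nat) (t : 'I_b -> nat) (i j : 'I_b) : j != i ->
  (t j + t i <= \sum_(k < b) t k)%N.
Proof.
move=> ji; rewrite (bigD1 j) //= (bigD1 i) /=; last by rewrite eq_sym.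
by rewrite addnA leq_addr.
Qed.

Lemma sum_delta (b : nat) (i : 'I_b) : (\sum_(j < b) (j == i : nat))%N = 1%N.
Proof.
rewrite (bigD1 i) //= eqxx big1 // => j /negbTE ->; done.
Qed.

Lemma Rg_step_i (b r : nat) (A : 'I_b -> nat -> rat) (i : 'I_b) :
  \sum_(t : {ffun 'I_b -> 'I_r.+2} | ((\sum_(j < b) (t j : nat))%N == r.+1) && (0 < t i)%N)
     (r`!)%:R / \prod_(j < b) ((t j - (j == i))`!)%:R * \prod_(j < b) A j (t j)
  = Rg r (fun j m => A j (m + (j == i))%N).
Proof.
pose h (t' : {ffun 'I_b -> 'I_r.+1}) : {ffun 'I_b -> 'I_r.+2} :=
  [ffun j => inord (t' j + (j == i))].
pose h' (t : {ffun 'I_b -> 'I_r.+2}) : {ffun 'I_b -> 'I_r.+1} :=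
  [ffun j => inord (t j - (j == i))].
have hE : forall t' j, (h t' j : nat) = (t' j + (j == i))%N.
  move=> t' j; rewrite ffunE inordK //.
  by have := ltn_ord (t' j); case: (j == i) => /=; lia.
have h'hE : forall t', h' (h t') = t'.
  move=> t'; apply/ffunP => j; apply/val_inj; rewrite ffunE /= inordK hE addnK //.
rewrite (reindex_onto h h'); last first.
  move=> t /andP[/eqP Hs Hi]; apply/ffunP => j; apply/val_inj.
  have Hj : (t j - (j == i) < r.+1)%N.
    have := ltn_ord (t j); case: eqP => [->|/eqP ji] /=; first by lia.
    have := @sum_le2 b (fun k => (t k : nat)) i j ji; rewrite Hs /= => H.
    lia.
  rewrite /= hE ffunE inordK //; case: (j =P i) => [->|] /=; lia.
rewrite /Rg; apply: eq_big.
  move=> t'; rewrite h'hE eqxx andbT hE eqxx addn1 /= ltnS leq0n andbT.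
  rewrite (eq_bigr (fun j => (t' j + (j == i))%N)); last by move=> j _; rewrite hE.
  by rewrite big_split /= sum_delta addn1 eqSS.
move=> t' _; congr (_ / _ * _).
  by apply: eq_bigr => j _; rewrite hE addnK.
by apply: eq_bigr => j _; rewrite hE.
Qed.

Lemma Rg_step (b r : nat) (A : 'I_b -> nat -> rat) :
  Rg r.+1 A = \sum_(i < b) Rg r (fun j m => A j (m + (j == i))%N).
Proof.
rewrite {1}/Rg (eq_bigr (fun t : {ffun 'I_b -> 'I_r.+2} => \sum_(i < b | (0 < t i)%N)
   (r`!)%:R / \prod_(j < b) ((t j - (j == i))`!)%:R * \prod_(j < b) A j (t j))); last first.
  move=> t /eqP Hs.
  rewrite (@wt_split b r (fun k => t k : nat)) //= big_distrl /=.
  done.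
rewrite (exchange_big_dep xpredT) //=.
apply: eq_bigr => i _; rewrite -Rg_step_i.
by apply: eq_bigl => t.
Qed.

Lemma coef_true (q m : nat) : (1 < q)%N ->
  coef_a q m true = ((q%:R - 1) ^+ m + (q%:R - 1) * (-1) ^+ m) / q%:R.
Proof.
move=> Hq; rewrite /coef_a !natQ.
have q0 : q%:R != 0 :> rat by rewrite pnatr_eq0; lia.
have q1 : q%:R - 1 != 0 :> rat.
  by rewrite subr_eq0 pnatr_eq1; lia.
case: m => [|m].
  have -> : (0%:Z - 1 = -1 :> int)%R by [].
  rewrite !exprN1 invrN1 !expr0; field.
  by rewrite q0 q1.
have -> : (m.+1%:Z - 1 = m%:Z :> int)%R by rewrite -addn1 PoszD addrK.
rewrite -!exprnP !exprS; field.
by rewrite q0.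
Qed.

Lemma coef_false (q m : nat) :
  coef_a q m false = ((q%:R - 1) ^+ m - (-1) ^+ m) / q%:R.
Proof. by rewrite /coef_a !natQ mulrC mul1r. Qed.

Lemma coef_rec0 (q m : nat) : (1 < q)%N ->
  (q%:R - 1) * coef_a q m false = coef_a q m.+1 true.
Proof.
move=> Hq; rewrite coef_true // coef_false !exprS.
have q0 : q%:R != 0 :> rat by rewrite pnatr_eq0; lia.
by field.
Qed.

Lemma coef_rec1 (q m : nat) : (1 < q)%N ->
  coef_a q m true + (q%:R - 2) * coef_a q m false = coef_a q m.+1 false.
Proof.
move=> Hq; rewrite coef_true // !coef_false !exprS.
have q0 : q%:R != 0 :> rat by rewrite pnatr_eq0; lia.
by field.
Qed.

Lemma sum_blocks (f : nat -> rat) (m b : nat) :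
  \sum_(j < m * b) f j = \sum_(l < m) \sum_(i < b) f (l * b + i)%N.
Proof.
elim: m => [|m IH]; first by rewrite mul0n !big_ord0.
rewrite big_ord_recr /= -IH.
have -> : (m.+1 * b = m * b + b)%N by rewrite mulSnr.
rewrite big_split_ord /=; congr (_ + _).
Qed.

Lemma sum_period (f : nat -> rat) (m u : nat) :
  (forall j, f (j + u)%N = f j) ->
  \sum_(j < m * u) f j = m%:R * \sum_(j < u) f j.
Proof.
move=> Hf; rewrite sum_blocks.
rewrite (eq_bigr (fun _ => \sum_(j < u) f j)); last first.
  move=> l _; apply: eq_bigr => i _; elim: (l : nat) => [|l' IH]; first by rewrite mul0n.
  by rewrite mulSnr addnAC Hf.
by rewrite sumr_const card_ord mulr_natl.
Qed.

Lemma nonzero_pow (F : finFieldType) (n : nat) (w : F) :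
  n.-primitive_root w -> #|F| = n.+1 ->
  [set x : F | x != 0] = [set w ^+ (j : nat) | j : 'I_n].
Proof.
move=> Hw HF; have n0 : (0 < n)%N by apply: prim_order_gt0 Hw.
apply/setP => x; rewrite inE; apply/idP/idP.
  move=> x0; have Hx : x ^+ n = 1.
    have := expf_card x; rewrite HF exprS => /eqP.
    by rewrite -[X in _ == X]mulr1 (inj_eq (mulfI x0)) => /eqP.
  by case: (prim_rootP Hw Hx) => i ->; apply/imsetP; exists i.
case/imsetP => j _ ->; apply: expf_neq0; apply/eqP => w0.
have := prim_expr_order Hw; rewrite w0 expr0n gtn_eqF // => /eqP; rewrite eq_sym oner_eq0.
done.
Qed.

Lemma sum_kpow (F : finFieldType) (k m b : nat) (w : F) (h : F -> rat) :
  (k * (m * b)).-primitive_root w -> #|F| = (k * (m * b)).+1 -> (0 < k)%N ->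
  \sum_(x : F) h (x ^+ k) =
  h 0 + k%:R * \sum_(i < b) \sum_(l < m) h (w ^+ (k * b) ^+ l * w ^+ (i * k)).
Proof.
move=> Hw HF k0.
rewrite (bigD1 0) //= expr0n eqn0Ngt k0 /=; congr (_ + _).
rewrite (eq_bigl (fun x => x \in [set w ^+ (j : nat) | j : 'I_(k * (m * b))])); last first.
  by move=> x; rewrite -nonzero_pow // inE.
rewrite big_imset /=; last first.
  move=> i j _ _ /eqP; rewrite (eq_prim_root_expr Hw) !modn_small // => /eqP; apply: val_inj.
pose f (j : nat) := h ((w ^+ k) ^+ j).
rewrite (eq_bigr (fun j : 'I_ _ => f j)); last by move=> j _; rewrite /f exprAC.
rewrite sum_period; last first.
  by move=> j; rewrite /f exprD -[w ^+ k ^+ (m * b)]exprM (prim_expr_order Hw) mulr1.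
apply: f_equal; rewrite sum_blocks exchange_big /=.
apply: eq_bigr => i _; apply: eq_bigr => l _; rewrite /f exprD -!exprM.
by rewrite (mulnC i) (mulnC l) mulnA.
Qed.

Lemma frobD (F : finFieldType) (p : nat) (chp : p \in [pchar F]) (e : nat) (x y : F) :
  (x + y) ^+ (p ^ e) = x ^+ (p ^ e) + y ^+ (p ^ e).
Proof.
elim: e => [|e IH]; first by rewrite !expr1.
by rewrite expnSr !exprM IH -!(pFrobenius_autE chp) rmorphD.
Qed.

Lemma frobN (F : finFieldType) (p : nat) (chp : p \in [pchar F]) (e : nat) (x : F) :
  (- x) ^+ (p ^ e) = - x ^+ (p ^ e).
Proof.
elim: e => [|e IH]; first by rewrite !expr1.
by rewrite expnSr !exprM IH -!(pFrobenius_autE chp) rmorphN.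
Qed.

Lemma frobB (F : finFieldType) (p : nat) (chp : p \in [pchar F]) (e : nat) (x y : F) :
  (x - y) ^+ (p ^ e) = x ^+ (p ^ e) - y ^+ (p ^ e).
Proof. by rewrite frobD // frobN. Qed.

Lemma frob_sum (F : finFieldType) (p : nat) (chp : p \in [pchar F]) (e b : nat) (f : 'I_b -> F) :
  (\sum_(i < b) f i) ^+ (p ^ e) = \sum_(i < b) f i ^+ (p ^ e).
Proof.
have p0 : (0 < p)%N by apply: prime_gt0; apply: pcharf_prime chp.
apply: (big_morph (fun x => x ^+ (p ^ e))) => [x y|]; first by rewrite frobD.
by rewrite expr0n expn_eq0 eqn0Ngt p0.
Qed.

Lemma fix_iter (F : finFieldType) (q j : nat) (x : F) : x ^+ q = x -> x ^+ (q ^ j) = x.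
Proof.
move=> Hx; elim: j => [|j IH]; first by rewrite expr1.
by rewrite expnSr exprM IH.
Qed.

Lemma coprime_pd (p m u : nat) : prime p -> (0 < m)%N ->
  primitive_divisor p m u -> coprime u p.
Proof.
move=> pp m0 [Hd _]; rewrite coprime_sym prime_coprime //; apply/negP => pu.
have h1 : (p %| p ^ m - 1)%N by apply: dvdn_trans Hd.
have h2 : (p %| p ^ m)%N by apply: dvdn_exp.
have := dvdn_sub h2 h1.
have p0 : (0 < p ^ m)%N by rewrite expn_gt0 prime_gt0.
have -> : (p ^ m - (p ^ m - 1) = 1)%N by lia.
by rewrite dvdn1 => /eqP p1; rewrite p1 in pp.
Qed.

Lemma conj_inj (F : finFieldType) (q b u : nat) (g : F) :
  (1 < q)%N -> coprime u q -> u.-primitive_root g ->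
  (forall h, (1 <= h)%N -> (h < b)%N -> ~~ (u %| q ^ h - 1)%N) ->
  forall j l, (j < b)%N -> (l < b)%N -> g ^+ (q ^ j) = g ^+ (q ^ l) -> j = l.
Proof.
move=> q1 cuq Hg Hu.
have key : forall j l, (j < l)%N -> (l < b)%N -> g ^+ (q ^ j) = g ^+ (q ^ l) -> False.
  move=> j l jl lb /eqP; rewrite (eq_prim_root_expr Hg) eq_sym eqn_mod_dvd; last first.
    by rewrite leq_exp2l // ltnW.
  rewrite -(subnKC (ltnW jl)) expnD -{2}[(q ^ j)%N]muln1 -mulnBr.
  have cu : coprime u (q ^ j) by rewrite coprimeXr.
  rewrite (Gauss_dvdr _ cu).
  apply/negP; apply: Hu; lia.
move=> j l jb lb E.
case: (ltngtP j l) => // [jl|lj]; first by case: (key j l jl lb E).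
by case: (key l j lj jb (esym E)).
Qed.


Lemma lin_indep (F : finFieldType) (p a b u : nat) (g : F) (d : 'I_b -> F) :
  p \in [pchar F] -> prime p -> (0 < a)%N -> coprime u (p ^ a) -> u.-primitive_root g ->
  (forall h, (1 <= h)%N -> (h < b)%N -> ~~ (u %| (p ^ a) ^ h - 1)%N) ->
  (forall i, d i ^+ (p ^ a) = d i) ->
  \sum_(i < b) d i * g ^+ i = 0 -> forall i, d i = 0.
Proof.
case: b d => [|b] d; first by move=> ? ? ? ? ? ? ? ? [].
move=> chp pp a0 cu Hg Hu Hd Hs.
have q1 : (1 < p ^ a)%N by rewrite -(exp1n a) ltn_exp2r // prime_gt1.
pose P : {poly F} := \poly_(j < b.+1) d (inord j).
have HP : forall x, P.[x] = \sum_(i < b.+1) d i * x ^+ i.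
  by move=> x; rewrite horner_poly; apply: eq_bigr => i _; rewrite inord_val.
have P0 : P = 0.
  apply/eqP; apply/negPn/negP => Pn0.
  pose rs := [seq g ^+ ((p ^ a) ^ j)%N | j <- iota 0 b.+1].
  have := @max_poly_roots _ P rs Pn0.
  have -> : all (root P) rs.
    apply/allP => x /mapP [j _ ->]; rewrite /root HP.
    have := congr1 (fun y => y ^+ (p ^ (a * j))) Hs.
    rewrite frob_sum // expr0n expn_eq0 eqn0Ngt prime_gt0 //= => H.
    apply/eqP; apply: etrans H; apply: eq_bigr => i _; rewrite exprMn expnM (fix_iter _ (Hd i)).
    by rewrite -!exprM mulnC.
  rewrite map_inj_in_uniq ?iota_uniq; last first.
    move=> j l; rewrite !mem_iota /= => jb lb; apply: (conj_inj q1 cu Hg Hu) => //.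
  rewrite size_map size_iota => /(_ isT isT).
  have := size_poly b.+1 (fun j => d (inord j)); rewrite -/P.
  by move=> h1 h2; have := leq_trans h2 h1; rewrite ltnn.
move=> i; have := coef_poly b.+1 (fun j => d (inord j)) i.
by rewrite -/P P0 coef0 ltn_ord inord_val.
Qed.

Lemma sum_ffunS (T : finType) (s : nat) (G : {ffun 'I_s.+1 -> T} -> rat) :
  \sum_(x : {ffun 'I_s.+1 -> T}) G x =
  \sum_(y : T) \sum_(x' : {ffun 'I_s -> T})
     G [ffun i => if unlift ord0 i is Some j then x' j else y].
Proof.
pose f (pr : T * {ffun 'I_s -> T}) : {ffun 'I_s.+1 -> T} :=
  [ffun i => if unlift ord0 i is Some j then pr.2 j else pr.1].
pose g (x : {ffun 'I_s.+1 -> T}) : T * {ffun 'I_s -> T} :=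
  (x ord0, [ffun j => x (lift ord0 j)]).
have fg : cancel g f.
  move=> x; apply/ffunP => i; rewrite ffunE; case: unliftP => [j ->|->] /=.
    by rewrite ffunE.
  done.
have gf : cancel f g.
  case=> y x'; rewrite /g /f ffunE unlift_none; congr (_, _).
  by apply/ffunP => j; rewrite !ffunE liftK.
rewrite (reindex f) /=; last by apply: onW_bij; exists g.
by rewrite pair_big /=.
Qed.

Definition Mq (F : finFieldType) (k s : nat) (al : F) : rat :=
  \sum_(x : {ffun 'I_s -> F}) ((\sum_(i < s) x i ^+ k) == al)%:R.

Lemma card_Mq (F : finFieldType) (k s : nat) (al : F) :
  (#|[set x : {ffun 'I_s -> F} | \sum_(i < s) x i ^+ k == al]|)%:Q = Mq k s al.
Proof.
rewrite natQ -sum1_card natr_sum big_mkcond /Mq; apply: eq_bigr => x _.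
by rewrite inE; case: ifP.
Qed.

Lemma Mq_rec (F : finFieldType) (k s : nat) (al : F) :
  Mq k s.+1 al = \sum_(y : F) Mq k s (al - y ^+ k).
Proof.
rewrite /Mq sum_ffunS; apply: eq_bigr => y _; apply: eq_bigr => x _.
rewrite big_ord_recl !ffunE unlift_none.
rewrite (eq_bigr (fun j => x j ^+ k)); last by move=> j _; rewrite ffunE liftK.
by rewrite [in RHS]eq_sym subr_eq [in RHS]eq_sym addrC.
Qed.

Fixpoint W (F : finFieldType) (b m k : nat) (w : F) (r : nat) (al : F) {struct r} : rat :=
  match r with
  | 0 => (al == 0)%:R
  | r'.+1 => \sum_(i < b) \sum_(l < m) W b m k w r' (al - w ^+ (k * b) ^+ l * w ^+ (i * k))
  end.

Lemma pascal_sum (T : nat -> rat) (s : nat) :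
  \sum_(r < s.+1) 'C(s, r)%:R * T r + \sum_(r < s.+1) 'C(s, r)%:R * T r.+1 =
  \sum_(r < s.+2) 'C(s.+1, r)%:R * T r.
Proof.
rewrite [in RHS]big_ord_recl [X in X + _ = _]big_ord_recl /= !bin0.
rewrite [in RHS](eq_bigr (fun r : 'I_s.+1 => 'C(s, r)%:R * T r.+1 + 'C(s, r.+1)%:R * T r.+1)); last first.
  by move=> r _; rewrite /bump /= add1n binS natrD mulrDl addrC.
rewrite big_split /= -addrA; congr (_ + _).
rewrite addrC; congr (_ + _).
by rewrite big_ord_recr /= bin_small // mul0r addr0.
Qed.

Lemma Mq_formula (F : finFieldType) (b m k : nat) (w : F) :
  (k * (m * b)).-primitive_root w -> #|F| = (k * (m * b)).+1 -> (0 < k)%N ->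
  forall s al, Mq k s al = \sum_(r < s.+1) 'C(s, r)%:R * (k%:R ^+ r * W b m k w r al).
Proof.
move=> Hw HF k0; elim=> [|s IH] al.
  rewrite /Mq big_ord_recl big_ord0 addr0 bin0 mul1r expr0 mul1r /= eq_sym.
  rewrite (eq_bigr (fun _ => ((0 : F) == al)%:R)); last by move=> x _; rewrite big_ord0.
  by rewrite sumr_const card_ffun card_ord expn0 mulr1n.
rewrite Mq_rec (sum_kpow (fun z => Mq k s (al - z)) Hw HF k0) subr0.
rewrite !IH -(pascal_sum (fun r => k%:R ^+ r * W b m k w r al)); congr (_ + _).
under eq_bigr => i _ do under eq_bigr => l _ do rewrite IH.
have -> : forall (f : 'I_s.+1 -> 'I_b -> 'I_m -> rat),
    \sum_(i < b) \sum_(l < m) \sum_(r < s.+1) f r i l =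
    \sum_(r < s.+1) \sum_(i < b) \sum_(l < m) f r i l.
  by move=> f; under eq_bigr => i _ do rewrite exchange_big; rewrite exchange_big.
rewrite big_distrr /=; apply: eq_bigr => r _ /=.
rewrite [LHS]big_distrr /= [RHS]mulrA [RHS]big_distrr /=; apply: eq_bigr => i _.
rewrite [LHS]big_distrr /= [RHS]big_distrr /=; apply: eq_bigr => l _.
rewrite exprS; ring.
Qed.

Lemma qstep (F : finFieldType) (q m : nat) (be : F) (x : F) (t : nat) :
  (1 < q)%N -> m = (q - 1)%N -> (forall l, be ^+ l != 0) ->
  (x != 0 -> \sum_(l < m) (be ^+ l == x)%:R = 1 :> rat) ->
  \sum_(l < m) coef_a q t ((x - be ^+ l) == 0) = coef_a q t.+1 (x == 0).
Proof.
move=> q1 -> Hbe Hc.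
have mE : (q - 1)%:R = q%:R - 1 :> rat by rewrite natrB // ltnW.
have [->|x0] := eqVneq x 0.
  rewrite (eq_bigr (fun _ => coef_a q t false)); last first.
    by move=> l _; rewrite sub0r oppr_eq0 (negbTE (Hbe l)).
  by rewrite sumr_const card_ord -mulr_natl mE coef_rec0.
rewrite -coef_rec1 //.
rewrite (eq_bigr (fun l : 'I_(q - 1) => coef_a q t false +
     (be ^+ l == x)%:R * (coef_a q t true - coef_a q t false))); last first.
  move=> l _; rewrite subr_eq0 eq_sym; case: (be ^+ l == x) => /=.
    by rewrite mul1r; ring.
  by rewrite mul0r addr0.
move: (coef_a q t true) (coef_a q t false) => ct cf.
rewrite big_split sumr_const card_ord -big_distrl (Hc x0).
rewrite /= mul1r -[cf *+ _]mulr_natl mE.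
ring.
Qed.

Lemma coef0t (q : nat) : (1 < q)%N -> coef_a q 0 true = 1.
Proof.
move=> q1; rewrite coef_true // !expr0 mulr1.
have q0 : q%:R != 0 :> rat by rewrite pnatr_eq0; lia.
by rewrite addrC subrK divff.
Qed.

Lemma coef0f (q : nat) : coef_a q 0 false = 0.
Proof. by rewrite coef_false !expr0 subrr mul0r. Qed.

Lemma W_R (F : finFieldType) (q b m k : nat) (w : F) :
  (1 < q)%N -> m = (q - 1)%N ->
  (forall l, w ^+ (k * b) ^+ l != 0) ->
  (forall l, (w ^+ (k * b) ^+ l) ^+ q = w ^+ (k * b) ^+ l) ->
  (forall x : F, x ^+ q = x -> x != 0 ->
     \sum_(l < m) (w ^+ (k * b) ^+ l == x)%:R = 1 :> rat) ->
  (forall x y : F, x ^+ q = x -> y ^+ q = y -> (x - y) ^+ q = x - y) ->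
  (forall d : 'I_b -> F, (forall i, d i ^+ q = d i) ->
     \sum_(i < b) d i * w ^+ (i * k) = 0 -> forall i, d i = 0) ->
  forall r (c : 'I_b -> F), (forall i, c i ^+ q = c i) ->
  W b m k w r (\sum_(i < b) c i * w ^+ (i * k)) = Rg r (fun j t => coef_a q t (c j == 0)).
Proof.
move=> q1 mE Hb0 Hbq Hcnt Hsub Hind; elim=> [|r IH] c Hc.
  rewrite /Rg /=.
  have tz : forall (t : {ffun 'I_b -> 'I_1}) j, (t j : nat) = 0%N.
    by move=> t j; rewrite (ord1 (t j)).
  rewrite [RHS](eq_bigl xpredT); last by move=> t; rewrite big1 // => j _; rewrite tz.
  rewrite [RHS](eq_bigr (fun _ => \prod_(j < b) coef_a q 0 (c j == 0))); last first.
    move=> t _; rewrite big1; last by move=> j _; rewrite tz.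
    by rewrite divr1 mul1r; apply: eq_bigr => j _; rewrite tz.
  rewrite sumr_const card_ffun !card_ord exp1n mulr1n.
  case: (boolP [forall j, c j == 0]) => [/forallP Hall|].
    rewrite big1; last by move=> j _; rewrite (eqP (Hall j)) mul0r.
    by rewrite eqxx big1 // => j _; rewrite (eqP (Hall j)) eqxx coef0t.
  rewrite negb_forall => /existsP [j cj].
  rewrite [RHS](bigD1 j) //= (negbTE cj) coef0f mul0r.
  case: eqP => // /(Hind c Hc) H0; by rewrite H0 eqxx in cj.
rewrite Rg_step /=; apply: eq_bigr => i _.
pose c' (l : nat) := fun j : 'I_b => c j - (j == i)%:R * w ^+ (k * b) ^+ l.
have Hc' : forall l j, c' l j ^+ q = c' l j.
  move=> l j; apply: Hsub => //; case: (j == i); first by rewrite mul1r.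
  by rewrite mul0r expr0n gtn_eqF //; lia.
have Hphi : forall l : nat, \sum_(j < b) c j * w ^+ (j * k) - w ^+ (k * b) ^+ l * w ^+ (i * k)
    = \sum_(j < b) c' l j * w ^+ (j * k).
  move=> l; rewrite /c'; under [RHS]eq_bigr do rewrite mulrBl.
  rewrite sumrB; congr (_ - _); rewrite (bigD1 i) //= eqxx mul1r big1 ?addr0 //.
  by move=> j /negbTE ->; rewrite !mul0r.
transitivity (\sum_(l < m) Rg r (fun j t => coef_a q t (c' l j == 0))).
  by apply: eq_bigr => l _; rewrite Hphi IH.
rewrite /Rg exchange_big /=; apply: eq_bigr => t _; rewrite -big_distrr /=; congr (_ * _).
rewrite [RHS](bigD1 i) //= eqxx addn1 -(qstep _ _ mE Hb0) //; last first.
  by move=> cnz; apply: Hcnt.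
rewrite big_distrl /=; apply: eq_bigr => l _; rewrite (bigD1 i) //=; congr (_ * _).
  by rewrite /c' eqxx mul1r.
by apply: eq_bigr => j /negbTE ji; rewrite /c' ji mul0r subr0 addn0.
Qed.

Lemma prim_pow (F : finFieldType) (n d e : nat) (w : F) :
  n.-primitive_root w -> n = (d * e)%N -> (0 < d)%N -> e.-primitive_root (w ^+ d).
Proof.
by move=> Hw nE d0; have := exp_prim_root Hw d; rewrite nE gcdnMr mulKn.
Qed.

Lemma prim_neq0 (F : finFieldType) (n : nat) (w : F) :
  n.-primitive_root w -> w != 0.
Proof.
move=> Hw; have n0 : (0 < n)%N by apply: prim_order_gt0 Hw.
apply/eqP => w0; have := prim_expr_order Hw; rewrite w0 expr0n gtn_eqF //.
by move/eqP; rewrite eq_sym oner_eq0.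
Qed.

Lemma N_Rg (q k b r : nat) (z : 'I_b -> bool) :
  @N_r q k b r z = k%:R ^+ r * Rg r (fun j t => coef_a q t (z j)).
Proof.
rewrite /N_r /Rg natQ; congr (_ * _); apply: eq_bigr => t _.
Qed.

Unset Implicit Arguments.

Theorem theorem4p4 (p a b k : nat) (F : finFieldType)
  (Hp : prime p) (Ha : (0 < a)%N) (Hb : (1 < b)%N)
  (HF : #|F| = (p ^ (a * b))%N)
  (Hk : (k * (b * (p ^ a - 1)))%N = (p ^ (a * b) - 1)%N)
  (Hu : primitive_divisor p (a * b) (b * (p ^ a - 1)))
  (omega : F) (Homega : (p ^ (a * b) - 1).-primitive_root omega)
  (alpha : F) (c : 'I_b -> F)
  (Hc : forall i, c i ^+ (p ^ a) = c i)
  (Halpha : alpha = \sum_(i < b) c i * omega ^+ (i * k))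
  (s : nat) (Hs : (1 <= s)%N) :
  (#|[set x : {ffun 'I_s -> F} | \sum_(i < s) x i ^+ k == alpha]|)%:Q =
    (if alpha == 0 then 1 else 0) +
    \sum_(1 <= r < s.+1) ('C(s, r))%:Q * @N_r (p ^ a) k b r (fun i => c i == 0).
Proof.
have chp : p \in [pchar F] := card_finPcharP HF Hp.
have p1 : (1 < p)%N := prime_gt1 Hp.
have q1 : (1 < p ^ a)%N by rewrite -(exp1n a) ltn_exp2r.
have ab0 : (0 < a * b)%N by rewrite muln_gt0 Ha; lia.
have n1 : (1 < p ^ (a * b))%N by rewrite -(exp1n (a * b)) ltn_exp2r.
set q := (p ^ a)%N in Hk Hu Hc q1 *.
set m := (q - 1)%N.
have nE : (p ^ (a * b) - 1 = k * (m * b))%N by rewrite -Hk (mulnC b).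
have k0 : (0 < k)%N by rewrite lt0n; apply/eqP => k00; rewrite k00 mul0n in nE; lia.
have Hw : (k * (m * b)).-primitive_root omega by rewrite -nE.
have HF' : #|F| = (k * (m * b)).+1 by rewrite HF -nE; lia.
rewrite card_Mq (Mq_formula Hw HF' k0).
have om0 : omega != 0 := prim_neq0 Hw.
have Hb0 : forall l, omega ^+ (k * b) ^+ l != 0 by move=> l; rewrite !expf_neq0.
have mb0 : (0 < k * b)%N by rewrite muln_gt0 k0; lia.
have Hbprim : m.-primitive_root (omega ^+ (k * b)).
  by apply: (prim_pow Hw) => //; rewrite (mulnC m) mulnA.
have qE : q = m.+1 by rewrite /m; lia.
have Hbq : forall l, (omega ^+ (k * b) ^+ l) ^+ q = omega ^+ (k * b) ^+ l.
  by move=> l; rewrite exprAC qE exprS (prim_expr_order Hbprim) mulr1.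
have Hcnt : forall x : F, x ^+ q = x -> x != 0 ->
     \sum_(l < m) (omega ^+ (k * b) ^+ l == x)%:R = 1 :> rat.
  move=> x xq x0; have xm : x ^+ m = 1.
    apply/eqP; move: xq; rewrite qE exprS => /eqP.
    by rewrite -[X in _ == X]mulr1 (inj_eq (mulfI x0)).
  case: (prim_rootP Hbprim xm) => i ->.
  rewrite (bigD1 i) //= eqxx big1 ?addr0 // => l li.
  rewrite (eq_prim_root_expr Hbprim) !modn_small //.
  by case: eqP => // /val_inj lE; rewrite lE eqxx in li.
have Hsub : forall x y : F, x ^+ q = x -> y ^+ q = y -> (x - y) ^+ q = x - y.
  by move=> x y hx hy; rewrite /q frobB // hx hy.
have cu : coprime (b * m) q by apply: coprimeXr; apply: (coprime_pd Hp ab0 Hu).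
have Hg : (b * m).-primitive_root (omega ^+ k) by apply: (prim_pow Homega) => //; rewrite -Hk.
have Hu' : forall h, (1 <= h)%N -> (h < b)%N -> ~~ (b * m %| (p ^ a) ^ h - 1)%N.
  move=> h h1 hb; rewrite -expnM; apply: Hu.2; first by lia.
  by rewrite ltn_pmul2l.
have Hind : forall d : 'I_b -> F, (forall i, d i ^+ q = d i) ->
     \sum_(i < b) d i * omega ^+ (i * k) = 0 -> forall i, d i = 0.
  move=> d Hd Hsum; apply: (lin_indep chp Hp Ha cu Hg Hu' Hd).
  by apply: etrans _ Hsum; apply: eq_bigr => i _; rewrite -exprM mulnC.
have WR : forall r, W b m k omega r alpha = Rg r (fun j t => coef_a q t (c j == 0)).
  by move=> r; rewrite Halpha; apply: W_R.
rewrite big_ord_recl; congr (_ + _).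
  by rewrite bin0 expr0 !mul1r /=; case: (alpha == 0).
rewrite big_add1 big_mkord; apply: eq_bigr => i _.
rewrite N_Rg natQ WR.
by rewrite lift0.
Qed.
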